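(* Consider the VP forward SDE $\mathrm{d}\boldsymbol{x}_t=-\tfrac12\beta(t)\boldsymbol{x}_t\,\mathrm{d}t+\sqrt{\beta(t)}\,\mathrm{d}\boldsymbol{w}_t$ with $0\le\beta(t)\le\beta_{\max}<\infty$, $\alpha(t)=\exp(-\int_0^t\beta(s)\,\mathrm{d}s)$, started from a clean random variable $\boldsymbol{x}_0$ supported on a compact set $\mathcal{X}$ with $\sup_{\boldsymbol{x}\in\mathcal{X}}\|\boldsymbol{x}\|_2\le B_x$; let $p_t$ denote the law of $\boldsymbol{x}_t$. Suppose the score network satisfies $\mathbb{E}_{\boldsymbol{x}\sim p_t}\big[\|\nabla_{\boldsymbol{x}}\log p_t(\boldsymbol{x})-\boldsymbol{s}_{\boldsymbol{\theta}}(\boldsymbol{x},t)\|_2^2\big]\le\epsilon_s(t)^2$ for all $t$. Let $\hat{\boldsymbol{x}}_{0|t}=\frac{1}{\sqrt{\alpha(t)}}\big(\boldsymbol{x}_t+(1-\alpha(t))\boldsymbol{s}_{\boldsymbol{\theta}}(\boldsymbol{x}_t,t)\big)$. Then for every $t\in[0,T]$, $$\mathbb{E}\|\hat{\boldsymbol{x}}_{0|t}\|^2\le K(t)<\infty,\qquad K(t)=\Big(B_x+\frac{1-\alpha(t)}{\sqrt{\alpha(t)}}\epsilon_s(t)\Big)^2,$$ where the expectation is over $\boldsymbol{x}_t\sim p_t$. *)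

(* Defs.v *)
From HB Require Import structures.
From mathcomp Require Import all_boot all_order all_algebra.
From mathcomp Require Import all_classical all_reals all_analysis.
Set Implicit Arguments. Unset Strict Implicit. Unset Printing Implicit Defensive.
Import Order.TTheory GRing.Theory Num.Theory.
Import numFieldNormedType.Exports.
Local Open Scope classical_set_scope.
Local Open Scope ring_scope.

Section defs.
Context {R : realType} {d : nat}.

Definition sqnorm2 (v : 'rV[R]_d) : R := \sum_(i < d) (v ord0 i) ^+ 2.
Definition norm2 (v : 'rV[R]_d) : R := Num.sqrt (sqnorm2 v).

Definition vp_alpha (beta : R -> R) (t : R) : R :=
  expR (- fine (\int[lebesgue_measure]_(s in `[0%R, t]) (beta s)%:E)%E).

(* the forward VP process at time t: x_t = sqrt(alpha) x_0 + sqrt(1-alpha) z,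
   the (exact) solution of the linear VP SDE *)
Definition vp_xt {T : Type} (a : R) (X0 Z : T -> 'rV[R]_d) (w : T) : 'rV[R]_d :=
  Num.sqrt a *: X0 w + Num.sqrt (1 - a) *: Z w.

(* Z is a standard Gaussian vector in R^d (i.i.d. N(0,1) coordinates)
   independent of X0: joint law on measurable rectangles *)
Definition std_gauss_indep {d0} {T : measurableType d0} (P : probability T R)
  (X0 Z : T -> 'rV[R]_d) : Prop :=
  forall A B : 'I_d -> set R,
    (forall i, measurable (A i)) -> (forall i, measurable (B i)) ->
    P ([set w | forall i, A i (X0 w ord0 i)] `&` [set w | forall i, B i (Z w ord0 i)])
    = (P [set w | forall i, A i (X0 w ord0 i)] * \prod_(i < d) normal_prob 0 1 (B i))%E.

(* density p_t(x) of x_t (Gaussian mixture over the law of x_0) *)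
Definition vp_density {d0} {T : measurableType d0} (P : probability T R)
  (a : R) (X0 : T -> 'rV[R]_d) (x : 'rV[R]_d) : R :=
  fine (\int[P]_w (\prod_(i < d)
          normal_pdf (Num.sqrt a * X0 w ord0 i) (Num.sqrt (1 - a)) (x ord0 i))%:E)%E.

Definition grad (f : 'rV[R]_d -> R) (x : 'rV[R]_d) : 'rV[R]_d :=
  \row_(i < d) derive f x (delta_mx ord0 i).

Definition score {d0} {T : measurableType d0} (P : probability T R)
  (a : R) (X0 : T -> 'rV[R]_d) : 'rV[R]_d -> 'rV[R]_d :=
  grad (fun y => ln (vp_density P a X0 y)).

End defs.

(* Main.v *)
Require Import Defs.
From HB Require Import structures.
From mathcomp Require Import all_boot all_order all_algebra.
From mathcomp Require Import all_classical all_reals all_analysis.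
From mathcomp Require Import ring lra.
From mathcomp Require Import measurable_realfun.
Import Order.TTheory GRing.Theory Num.Theory.
Import numFieldNormedType.Exports.
Local Open Scope classical_set_scope.
Local Open Scope ring_scope.

Set Implicit Arguments. Unset Strict Implicit. Unset Printing Implicit Defensive.
Section H.
Context {R : realType}.

Lemma npdfE (m s x : R) : s != 0 ->
  normal_pdf m s x = normal_peak s * expR (- (x - m) ^+ 2 / (s ^+ 2 *+ 2)).
Proof. by move=> s0; rewrite normal_pdfE. Qed.

Lemma npdf_sym (m s x : R) : s != 0 -> normal_pdf m s x = normal_pdf x s m.
Proof. by move=> s0; rewrite !npdfE// -sqrrN opprB. Qed.

Lemma npdf_gt0 (m s x : R) : s != 0 -> 0 < normal_pdf m s x.
Proof. by move=> s0; rewrite npdfE// mulr_gt0 ?expR_gt0 ?normal_peak_gt0. Qed.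

Lemma npdf_derive (m s c h : R) : s != 0 ->
  is_derive h 1 (fun h => normal_pdf m s (h + c))
    (- (h + c - m) / s ^+ 2 * normal_pdf m s (h + c)).
Proof.
move=> s0.
pose k := - (s ^+ 2 *+ 2)^-1.
have e : (fun h => normal_pdf m s (h + c)) =
  normal_peak s \*: (expR \o (k \*: ((fun h => h + (c - m)) ^+ 2))).
  apply/funext => y /=; rewrite npdfE//. congr (_ * expR _).
  change ((+%R^~ (c - m) ^+ 2) y) with ((y + (c - m)) ^+ 2).
  rewrite /k /GRing.scale /=; ring.
rewrite e.
have h1 : is_derive h 1 (fun h => h + (c - m)) 1.
  have := is_derive_shift h 1 (c - m). by [].
have h2 := is_deriveX 2 h1.
have h3 := is_deriveZ k h2.
have h4 := is_derive1_comp (is_derive_expR _) h3.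
have h5 := is_deriveZ (normal_peak s) h4.
eapply is_derive_eq; [exact h5|].
have -> : (k \*: (+%R^~ (c - m) ^+ 2)) h = k * (h + (c - m)) ^+ 2 by [].
rewrite npdfE// /k /GRing.scale /= mulr1 expr1.
have s20 : s ^+ 2 != 0 by rewrite expf_neq0.
rewrite (_ : - (h + c - m) ^+ 2 / (s ^+ 2 *+ 2) = - (s ^+ 2 *+ 2)^-1 * (h + (c - m)) ^+ 2); last by ring.
field.
by [].
Qed.
End H.
Local Open Scope ereal_scope.
Lemma ge0_le_integral_nm {R : realType} d (T : measurableType d)
  (mu : {measure set T -> \bar R}) (f g : T -> \bar R) :
  (forall x, (0 <= f x)%E) -> (forall x, (f x <= g x)%E) ->
  (\int[mu]_x f x <= \int[mu]_x g x)%E.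
Proof.
move=> f0 fg.
have g0 x : (0 <= g x)%E by apply: le_trans (f0 x) (fg x).
rewrite /integral !patch_setT.
have -> : f^\- = cst 0%E by apply/funext => x; apply: (@ge0_funenegE _ _ setT) => //; rewrite inE.
have -> : g^\- = cst 0%E by apply/funext => x; apply: (@ge0_funenegE _ _ setT) => //; rewrite inE.
have -> : f^\+ = f by apply/funext => x; apply: (@ge0_funeposE _ _ setT) => //; rewrite inE.
have -> : g^\+ = g by apply/funext => x; apply: (@ge0_funeposE _ _ setT) => //; rewrite inE.
apply: leeB => //.
apply: ereal_sup_le => _ [h /= hf <-]; exists h => //= x.
exact: le_trans (hf x) (fg x).
Qed.
Local Close Scope ereal_scope.
Lemma bnd_int {R : realType} d (T : measurableType d) (P : probability T R) (f : T -> R) (M : R) :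
  measurable_fun setT f -> (forall x, `|f x| <= M) -> P.-integrable setT (EFin \o f).
Proof.
move=> mf fM; apply: measurable_bounded_integrable => //.
  by apply: (le_lt_trans (probability_le1 P _)) => //; rewrite ltry.
exists M; split; first by rewrite num_real.
move=> y My x _; exact: le_trans (fM x) (ltW My).
Qed.

Lemma Rintegral_sum {R : realType} d (T : measurableType d) (P : probability T R)
  (I : Type) (s : seq I) (f : I -> T -> R) :
  (forall i, P.-integrable setT (EFin \o f i)) ->
  Rintegral P setT (fun w => \sum_(i <- s) f i w) = \sum_(i <- s) Rintegral P setT (f i).
Proof.
move=> fi.
have si (s' : seq I) : P.-integrable setT (EFin \o (fun w => \sum_(i <- s') f i w)).
  have -> : (EFin \o (fun w => \sum_(i <- s') f i w)) = (fun w => \sum_(i <- s' | true) (EFin \o f i) w)%E.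
    by apply/funext => w /=; rewrite sumEFin.
  by apply: integrable_sum => // i _; exact: fi.
elim: s => [|j s IH].
  under eq_Rintegral do rewrite big_nil.
  by rewrite big_nil Rintegral_cst // mul0r.
rewrite (@eq_Rintegral _ _ _ _ _ (fun w => f j w + \sum_(i <- s) f i w)); last first.
  by move=> w _; rewrite big_cons.
by rewrite big_cons RintegralD // IH.
Qed.

Lemma intZ {R : realType} d (T : measurableType d) (P : probability T R) (f : T -> R) (k : R) :
  P.-integrable setT (EFin \o f) -> P.-integrable setT (EFin \o (fun w => k * f w)).
Proof.
move=> fi; have -> : (EFin \o (fun w => k * f w)) = (fun w => k%:E * (EFin \o f) w)%E.
  by apply/funext => w /=; rewrite EFinM.
exact: integrableZl.
Qed.
Arguments intZ {R d T P f k}.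
Lemma intB {R : realType} d (T : measurableType d) (P : probability T R) (f g : T -> R) :
  P.-integrable setT (EFin \o f) -> P.-integrable setT (EFin \o g) ->
  P.-integrable setT (EFin \o (fun w => f w - g w)).
Proof.
move=> fi gi; have -> : (EFin \o (fun w => f w - g w)) = ((EFin \o f) \- (EFin \o g))%E.
  by apply/funext => w /=; rewrite EFinB.
exact: integrableB.
Qed.
Arguments intB {R d T P f g}.
Lemma int_sum {R : realType} d (T : measurableType d) (P : probability T R)
  (I : Type) (s : seq I) (f : I -> T -> R) :
  (forall i, P.-integrable setT (EFin \o f i)) ->
  P.-integrable setT (EFin \o (fun w => \sum_(i <- s) f i w)).
Proof.
move=> fi.
have -> : (EFin \o (fun w => \sum_(i <- s) f i w)) = (fun w => \sum_(i <- s | true) (EFin \o f i) w)%E.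
  by apply/funext => w /=; rewrite sumEFin.
by apply: integrable_sum => // i _; exact: fi.
Qed.
Section Score.
Context {R : realType} {n : nat} {d0 : measure_display} {Omega : measurableType d0}
  (P : probability Omega R) (X0 : Omega -> 'rV[R]_n) (Bx a : R).
Hypothesis a0 : 0 < a.
Hypothesis a1 : a < 1.
Hypothesis mX : forall i, measurable_fun [set: Omega] (fun w => X0 w ord0 i).
Hypothesis bX : forall w i, `|X0 w ord0 i| <= Bx.
Hypothesis Bx0 : 0 <= Bx.

Definition sg := Num.sqrt (1 - a).
Lemma sg_gt0 : 0 < sg. Proof. by rewrite sqrtr_gt0 subr_gt0. Qed.
Lemma sg_neq0 : sg != 0. Proof. by rewrite gt_eqF // sg_gt0. Qed.
Lemma sg2 : sg ^+ 2 = 1 - a. Proof. by rewrite sqr_sqrtr // subr_ge0 ltW. Qed.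
Definition mu_ w j := Num.sqrt a * X0 w ord0 j.
Lemma sqa_le1 : Num.sqrt a <= 1.
Proof. by rewrite -sqrtr1 ler_sqrt // ltW. Qed.
Lemma mu_bnd w j : `|mu_ w j| <= Bx.
Proof.
rewrite /mu_ normrM ger0_norm ?sqrtr_ge0 //.
apply: le_trans (bX w j); rewrite ler_piMl // sqa_le1 //.
Qed.
Definition Wf (x : 'rV[R]_n) w := \prod_(j < n) normal_pdf (mu_ w j) sg (x ord0 j).
Definition Mw := \prod_(j < n) normal_peak sg.
Lemma vp_densityE x : vp_density P a X0 x = Rintegral P setT (Wf x).
Proof. by []. Qed.
Lemma mWf x : measurable_fun setT (Wf x).
Proof.
apply: measurable_prod => j _.
have -> : (fun w => normal_pdf (mu_ w j) sg (x ord0 j)) =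
   normal_pdf (x ord0 j) sg \o (fun w => Num.sqrt a * X0 w ord0 j).
  by apply/funext => w /=; rewrite npdf_sym // sg_neq0.
apply: measurableT_comp; first exact: measurable_normal_pdf.
by apply: measurable_realfun.measurable_funM => //; exact: measurable_cst.
Qed.
Lemma Wf_ge0 x w : 0 <= Wf x w.
Proof. by apply: prodr_ge0 => j _; exact: normal_pdf_ge0. Qed.
Lemma Wf_le x w : Wf x w <= Mw.
Proof.
apply: ler_prod => j _; rewrite normal_pdf_ge0 /=.
exact: normal_pdf_ub sg_neq0.
Qed.
Lemma Mw_ge0 : 0 <= Mw.
Proof. by apply: prodr_ge0 => j _; exact: normal_peak_ge0. Qed.
Lemma intWf x : P.-integrable setT (EFin \o Wf x).
Proof.
apply: (@bnd_int _ _ _ _ _ Mw); first exact: mWf.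
by move=> w; rewrite ger0_norm ?Wf_ge0 // Wf_le.
Qed.
Lemma intXWf x i : P.-integrable setT (EFin \o (fun w => X0 w ord0 i * Wf x w)).
Proof.
apply: (@bnd_int _ _ _ _ _ (Bx * Mw)).
  by apply: measurable_realfun.measurable_funM => //; exact: mWf.
move=> w; rewrite normrM (ger0_norm (Wf_ge0 x w)).
apply: ler_pM => //; [exact: Wf_ge0|exact: Wf_le].
Qed.
Lemma intX2Wf x i : P.-integrable setT (EFin \o (fun w => X0 w ord0 i ^+ 2 * Wf x w)).
Proof.
apply: (@bnd_int _ _ _ _ _ (Bx ^+ 2 * Mw)).
  apply: measurable_realfun.measurable_funM => //; last exact: mWf.
  exact: measurable_realfun.measurable_funX.
move=> w; rewrite normrM (ger0_norm (Wf_ge0 x w)) normrX.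
apply: ler_pM => //; try exact: Wf_ge0; try exact: Wf_le.
by rewrite lerXn2r // ?nnegrE // (le_trans _ (bX w i)).

Qed.
Lemma npdf_lb (m s c B : R) : s != 0 -> `|m| <= B ->
  normal_peak s * expR (- (`|c| + B) ^+ 2 / (s ^+ 2 *+ 2)) <= normal_pdf m s c.
Proof.
move=> s0 mB; rewrite npdfE //.
rewrite ler_pM2l ?normal_peak_gt0 // ler_expR !mulNr lerN2.
rewrite ler_pM2r ?invr_gt0 ?pmulrn_lgt0 ?exprn_even_gt0 //.
rewrite -real_normK ?num_real //.
rewrite lerXn2r // ?nnegrE //; first by apply: addr_ge0 => //; apply: le_trans mB.
by apply: le_trans (ler_normB _ _) _; rewrite lerD2l.
Qed.
Definition Lw (x : 'rV[R]_n) :=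
  \prod_(j < n) (normal_peak sg * expR (- (`|x ord0 j| + Bx) ^+ 2 / (sg ^+ 2 *+ 2))).
Lemma Lw_gt0 x : 0 < Lw x.
Proof.
by apply: prodr_gt0 => j _; rewrite mulr_gt0 ?expR_gt0 ?normal_peak_gt0 ?sg_neq0.
Qed.
Lemma Z_gt0 x : 0 < Rintegral P setT (Wf x).
Proof.
apply: (lt_le_trans (Lw_gt0 x)).
have -> : Lw x = Rintegral P setT (fun=> Lw x).
  rewrite Rintegral_cst //; have -> : fine (P setT) = 1 by rewrite probability_setT.
  by rewrite mulr1.
apply: le_Rintegral => //; first by apply: (@bnd_int _ _ _ _ _ `|Lw x|) => //; exact: measurable_cst.
  exact: intWf.
move=> w _; apply: ler_prod => j _.
rewrite mulr_ge0 ?expR_ge0 ?normal_peak_ge0 //=.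
apply: npdf_lb; [exact: sg_neq0|exact: mu_bnd].
Qed.
Definition Cw (x : 'rV[R]_n) i w :=
  \prod_(j < n | j != i) normal_pdf (mu_ w j) sg (x ord0 j).
Definition fh (x : 'rV[R]_n) i h w := normal_pdf (mu_ w i) sg (h + x ord0 i) * Cw x i w.
Lemma Wf_shift x i h w : Wf (h *: delta_mx ord0 i + x) w = fh x i h w.
Proof.
rewrite /Wf /fh /Cw (bigD1 i) //=; congr (_ * _).
  by rewrite !mxE eqxx /= eqxx mulr1.
apply: eq_bigr => j ji; rewrite !mxE eqxx /= (negbTE ji) mulr0 add0r //.
Qed.
Lemma Wf_0 x i w : Wf x w = fh x i 0 w.
Proof. by rewrite -Wf_shift scale0r add0r. Qed.
Lemma fh_derive (x : 'rV[R]_n) (i : 'I_n) (h : R) (w : Omega) : is_derive h 1 (fun h => fh x i h w)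
  (- (h + x ord0 i - mu_ w i) / sg ^+ 2 * fh x i h w).
Proof.
eapply is_derive_eq.
  exact (is_deriveM (npdf_derive (mu_ w i) (x ord0 i) h sg_neq0) (is_derive_cst (Cw x i w) h 1)).
rewrite /fh /GRing.scale /=; ring.
Qed.
Lemma d1fh (x : 'rV[R]_n) (i : 'I_n) (h : R) (w : Omega) : partial1of2 (fh x i) h w =
  - (h + x ord0 i - mu_ w i) / sg ^+ 2 * fh x i h w.
Proof. by rewrite partial1of2E; have [_ ->] := fh_derive x i h w. Qed.
Lemma fh_Wf x i h : fh x i h = Wf (h *: delta_mx ord0 i + x).
Proof. by apply/funext => w; rewrite Wf_shift. Qed.
Lemma int_fh x i h : P.-integrable setT (EFin \o fh x i h).
Proof. by rewrite fh_Wf; exact: intWf. Qed.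
Definition Gc (x : 'rV[R]_n) i := ((`|x ord0 i| + 1 + Bx) * (sg ^+ 2)^-1) * Mw.
Lemma d1fh_ub x i h w : `|h| < 1 -> `|partial1of2 (fh x i) h w| <= Gc x i.
Proof.
move=> h1; rewrite d1fh /Gc normrM.
have fh0 : 0 <= fh x i h w by rewrite -Wf_shift Wf_ge0.
have fhM : fh x i h w <= Mw by rewrite -Wf_shift Wf_le.
rewrite (ger0_norm fh0).
apply: ler_pM => //.
rewrite normrM normrN (ger0_norm (_ : 0 <= (sg ^+ 2)^-1)); last first.
  by rewrite invr_ge0 exprn_ge0 // ltW // sg_gt0.
apply: ler_pM => //.
  by rewrite invr_ge0 exprn_ge0 // ltW // sg_gt0.
apply: le_trans (ler_normB _ _) _.
have := mu_bnd w i; have := ler_normD h (x ord0 i).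
move: (normr_ge0 (h + x ord0 i)) h1; lra.
Qed.
Definition Zs x := Rintegral P setT (Wf x).
Definition Ns x i := Rintegral P setT (fun w => X0 w ord0 i * Wf x w).
Lemma Gc_ge0 x i : 0 <= Gc x i.
Proof.
rewrite /Gc mulr_ge0 ?Mw_ge0 // mulr_ge0 //; last by rewrite invr_ge0 exprn_ge0 // ltW // sg_gt0.
by rewrite !addr_ge0.
Qed.
Section hyps.
Variables (x : 'rV[R]_n) (i : 'I_n).
Let I0 : `]-1, 1[%classic (0 : R).
Proof. by rewrite /= in_itv /= ltrN10 ltr01. Qed.
Let intf : forall h, `]-1, 1[%classic h -> P.-integrable setT (EFin \o fh x i h).
Proof. by move=> h _; exact: int_fh. Qed.
Let derf1 : forall h w, `]-1, 1[%classic h -> setT w -> derivable ((fh x i)^~ w) h 1.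
Proof. by move=> h w _ _; have [] := fh_derive x i h w. Qed.
Let G0 : forall w : Omega, 0 <= (fun _ => Gc x i) w.
Proof. by move=> w; exact: Gc_ge0. Qed.
Let intG : P.-integrable setT (EFin \o (fun _ : Omega => Gc x i)).
Proof. by apply: (@bnd_int _ _ _ _ _ `|Gc x i|) => //; exact: measurable_cst. Qed.
Let Gub : forall h w, `]-1, 1[%classic h -> setT w -> `|partial1of2 (fh x i) h w| <= (fun _ => Gc x i) w.
Proof.
move=> h w; rewrite /= in_itv /= => /andP[h1 h2] _; apply: d1fh_ub.
by rewrite ltr_norml h1 h2.
Qed.
Lemma Fh_derive1 : derive1 (fun h => Rintegral P setT (fh x i h)) 0 =
  (Num.sqrt a * Ns x i - x ord0 i * Zs x) / (1 - a).
Proof.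
rewrite (differentiation_under_integral measurableT I0 intf derf1 G0 intG Gub).
have a10 : 1 - a != 0 by rewrite subr_eq0 gt_eqF.
rewrite (@eq_Rintegral _ _ _ _ _ (fun w => (Num.sqrt a / (1 - a)) * (X0 w ord0 i * Wf x w) - (x ord0 i / (1 - a)) * Wf x w)); last first.
  move=> w _; rewrite d1fh -Wf_0 sg2 /mu_; field => //.
rewrite RintegralB //; [|exact: intZ (intXWf _ _)|exact: intZ (intWf _)].
rewrite (RintegralZl _ measurableT (intXWf x i)) (RintegralZl _ measurableT (intWf x)).
rewrite /Ns /Zs; field => //.
Qed.
Lemma derF : derivable (fun h => Rintegral P setT (fh x i h)) 0 1.
Proof. exact: (derivable_under_integral measurableT I0 intf derf1 G0 intG Gub). Qed.
End hyps.
Lemma score_formula x i : score P a X0 x ord0 i =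
  (Num.sqrt a * Ns x i - x ord0 i * Zs x) / ((1 - a) * Zs x).
Proof.
rewrite /score /grad mxE.
pose F h := Rintegral P setT (fh x i h).
have F0 : F 0 = Zs x by rewrite /F /Zs fh_Wf scale0r add0r.
have -> : derive (fun y => ln (vp_density P a X0 y)) x (delta_mx ord0 i) = derive1 (@ln R \o F) 0.
  rewrite /derive /derive1; congr (lim (_ @ 0^')); apply/funext => h /=.
  rewrite addr0 vp_densityE /F fh_Wf; congr (_ *: (_ - ln _)).
  by rewrite vp_densityE fh_Wf scale0r add0r.
have Zp := Z_gt0 x.
rewrite (@derive1_comp R F (@ln R) 0); last 2 first.
- exact: derF.
- by rewrite F0; have [] := is_derive1_ln Zp.
rewrite F0 Fh_derive1 derive1E.
have [_ ->] := is_derive1_ln Zp.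
have a10 : 1 - a != 0 by rewrite subr_eq0 gt_eqF.
rewrite -/(Zs x); have Zn : Zs x != 0 by rewrite gt_eqF.
by field; rewrite a10 Zn.
Qed.
Definition mv x i := Ns x i / Zs x.
Lemma Zs_gt0 x : 0 < Zs x. Proof. exact: Z_gt0. Qed.
Lemma mv_coord x i : mv x i ^+ 2 * Zs x <= Rintegral P setT (fun w => X0 w ord0 i ^+ 2 * Wf x w).
Proof.
set m := mv x i.
have Nm : Ns x i = m * Zs x by rewrite /m /mv divfK // gt_eqF // Zs_gt0.
have H0 : 0 <= Rintegral P setT (fun w => (X0 w ord0 i - m) ^+ 2 * Wf x w).
  by apply: Rintegral_ge0 => w _; rewrite mulr_ge0 ?sqr_ge0 ?Wf_ge0.
rewrite (@eq_Rintegral _ _ _ _ _ (fun w => (X0 w ord0 i ^+ 2 * Wf x w - (2 * m) * (X0 w ord0 i * Wf x w)) + m ^+ 2 * Wf x w)) in H0; last first.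
  by move=> w _; ring.
rewrite RintegralD // in H0; last exact: intZ (intWf _).
  rewrite RintegralB // in H0; [|exact: intX2Wf|exact: intZ (intXWf _ _)].
  rewrite (RintegralZl _ measurableT (intXWf x i)) (RintegralZl _ measurableT (intWf x)) in H0.
  rewrite -/(Ns x i) -/(Zs x) Nm in H0.
  lra.
exact: intB (intX2Wf _ _) (intZ (intXWf _ _)).
Qed.
Lemma mv_bound x : (forall w, sqnorm2 (X0 w) <= Bx ^+ 2) ->
  \sum_(i < n) mv x i ^+ 2 <= Bx ^+ 2.
Proof.
move=> bX2.
have Zp := Zs_gt0 x.
rewrite -(ler_pM2r Zp) mulr_suml.
apply: le_trans (_ : \sum_(i < n) Rintegral P setT (fun w => X0 w ord0 i ^+ 2 * Wf x w) <= _).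
  by apply: ler_sum => i _; exact: mv_coord.
rewrite -Rintegral_sum; last by move=> i; exact: intX2Wf.
rewrite /Zs -(RintegralZl _ measurableT (intWf x)).
apply: le_Rintegral => //.
- by apply: int_sum => i; exact: intX2Wf.
- exact: intZ (intWf _).
move=> w _; rewrite -mulr_suml; apply: ler_wpM2r; first exact: Wf_ge0.
exact: bX2.
Qed.
Lemma x0hat_decomp (y s : 'rV[R]_n) i :
  ((Num.sqrt a)^-1 *: (y + (1 - a) *: s)) ord0 i =
  mv y i + (1 - a) / Num.sqrt a * (s ord0 i - score P a X0 y ord0 i).
Proof.
rewrite score_formula !mxE /mv.
have a10 : 1 - a != 0 by rewrite subr_eq0 gt_eqF.
have sa0 : Num.sqrt a != 0 by rewrite gt_eqF // sqrtr_gt0.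
have Zn : Zs y != 0 by rewrite gt_eqF // Zs_gt0.
by field; rewrite a10 sa0 Zn.
Qed.
Lemma sq_split (u v l : R) : 0 < l -> (u + v) ^+ 2 <= (1 + l) * u ^+ 2 + (1 + l^-1) * v ^+ 2.
Proof.
move=> l0.
have H : (1 + l) * u ^+ 2 + (1 + l^-1) * v ^+ 2 - (u + v) ^+ 2 = (l * u - v) ^+ 2 / l.
  by field; rewrite gt_eqF.
by rewrite -subr_ge0 H divr_ge0 ?sqr_ge0 ?ltW.
Qed.
Lemma pointwise (y s : 'rV[R]_n) (l : R) : 0 < l ->
  (forall w, sqnorm2 (X0 w) <= Bx ^+ 2) ->
  sqnorm2 ((Num.sqrt a)^-1 *: (y + (1 - a) *: s)) <=
  (1 + l) * Bx ^+ 2 + (1 + l^-1) * ((1 - a) / Num.sqrt a) ^+ 2 * sqnorm2 (score P a X0 y - s).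
Proof.
move=> l0 bX2.
rewrite /sqnorm2.
under eq_bigr do rewrite x0hat_decomp.
apply: le_trans (_ : \sum_(i < n) ((1 + l) * mv y i ^+ 2 + (1 + l^-1) * (((1 - a) / Num.sqrt a) ^+ 2 * ((score P a X0 y - s) ord0 i) ^+ 2)) <= _).
  apply: ler_sum => i _; apply: le_trans (sq_split _ _ l0) _.
  by rewrite !mxE -(sqrrN (_ - s ord0 i)) opprB; apply: lerD => //; rewrite exprMn.
rewrite big_split /= -!mulr_sumr -mulrA.
apply: lerD; last by [].
by rewrite ler_pM2l ?addr_gt0 // mv_bound.
Qed.
End Score.

Lemma lam_bound {R : realType} (X B K : R) : 0 <= B -> 0 <= K ->
  (forall l, 0 < l -> X <= (1 + l) * B ^+ 2 + (1 + l^-1) * K ^+ 2) -> X <= (B + K) ^+ 2.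
Proof.
move=> B0 K0 H.
have [Bz|Bp] := eqVneq B 0.
  rewrite Bz add0r; apply/ler_addgt0Pr => e e0.
  have [Kz|Kp] := eqVneq K 0.
    have := H 1 ltr01; rewrite Bz Kz; lra.
  have K2 : 0 < K ^+ 2 by rewrite exprn_gt0 // lt_neqAle eq_sym Kp.
  have := H (K ^+ 2 / e) (divr_gt0 K2 e0).
  rewrite Bz expr0n /= mulr0 add0r invf_div mulrDl mul1r divfK ?gt_eqF //.
have Bq : 0 < B by rewrite lt_neqAle eq_sym Bp.
have [Kz|Kp] := eqVneq K 0.
  rewrite Kz addr0; apply/ler_addgt0Pr => e e0.
  have B2 : 0 < B ^+ 2 by rewrite exprn_gt0.
  have := H (e / B ^+ 2) (divr_gt0 e0 B2).
  rewrite Kz expr0n /= mulr0 addr0 mulrDl mul1r divfK ?gt_eqF //.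
have Kq : 0 < K by rewrite lt_neqAle eq_sym Kp.
have := H (K / B) (divr_gt0 Kq Bq).
have -> : (1 + K / B) * B ^+ 2 + (1 + (K / B)^-1) * K ^+ 2 = (B + K) ^+ 2.
  by field; rewrite Bp Kp.
by [].
Qed.
Lemma mx_ge0 {R : realType} (x : R) : 0 <= Order.max x 0.
Proof. rewrite /Order.max; case: ifP => [_|/negbT]; [by []|by rewrite -leNgt]. Qed.
Lemma mx_ge {R : realType} (x : R) : x <= Order.max x 0.
Proof. rewrite /Order.max; case: ifP => [/ltW|_] //. Qed.
Lemma mx_le {R : realType} (x c : R) : x <= c -> 0 <= c -> Order.max x 0 <= c.
Proof. by rewrite /Order.max; case: ifP. Qed.
Lemma final_step {R : realType} d (T : measurableType d) (P : probability T R)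
  (Y G : T -> R) (A k E : R) :
  measurable_fun setT Y -> (forall w, 0 <= Y w) -> (forall w, 0 <= G w) -> 0 <= A -> 0 < k ->
  (forall w, Y w <= A + k * G w) -> (\int[P]_w (G w)%:E <= E%:E)%E ->
  (\int[P]_w (Y w)%:E <= (A + k * E)%:E)%E.
Proof.
move=> mY Y0 G0 A0 k0 YG IG.
pose Y' w := Order.max (Y w - A) 0 / k.
have Y'0 w : 0 <= Y' w by apply: divr_ge0; [exact: mx_ge0|exact: ltW].
have mY' : measurable_fun setT Y'.
  apply: measurable_realfun.measurable_funM; last exact: measurable_cst.
  apply: measurable_realfun.measurable_maxr; last exact: measurable_cst.
  by apply: measurable_realfun.measurable_funB => //; exact: measurable_cst.
have Y'G w : Y' w <= G w.
  rewrite ler_pdivrMr //; apply: mx_le; last by rewrite mulr_ge0 ?G0 ?ltW.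
  by rewrite lerBlDl mulrC YG.
have IY' : (\int[P]_w (Y' w)%:E <= E%:E)%E.
  apply: le_trans IG; apply: ge0_le_integral_nm => w; by rewrite lee_fin.
apply: (@le_trans _ _ (\int[P]_w ((A%:E) + (k%:E * (Y' w)%:E)))%E).
  apply: ge0_le_integral => //.
  - by move=> w _; rewrite lee_fin Y0.
  - exact/measurable_EFinP.
  - apply: emeasurable_funD; first exact: measurable_cst.
    apply: emeasurable_funM; first exact: measurable_cst.
    exact/measurable_EFinP.
  - move=> w _; rewrite -EFinM -EFinD lee_fin /Y' mulrCA divff ?gt_eqF // mulr1.
    by rewrite -lerBlDl; exact: mx_ge.
rewrite ge0_integralD //; last 2 first.
- by move=> w _; apply: mule_ge0; rewrite lee_fin // ltW.
- apply: emeasurable_funM; first exact: measurable_cst.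
  exact/measurable_EFinP.
have P1 : (P : {measure set T -> \bar R}) setT = 1%E by exact: probability_setT.
rewrite integral_cst // P1 mule1 ge0_integralZl_EFin //; last 3 first.
- by move=> w _; rewrite lee_fin.
- exact/measurable_EFinP.
- exact: ltW.
rewrite EFinD EFinM; apply: leeD => //.
by rewrite lee_pmul2l // lte_fin.
Qed.

Unset Implicit Arguments. Set Strict Implicit.

Theorem lemmaD10 (R : realType) (n : nat)
  (d0 : measure_display) (Omega : measurableType d0) (P : probability Omega R)
  (beta : R -> R) (beta_max : R) (T : R)
  (X0 Z : Omega -> 'rV[R]_n) (Xset : set 'rV[R]_n) (Bx : R)
  (s_theta : 'rV[R]_n -> R -> 'rV[R]_n) (eps_s : R -> R) :
  measurable_fun [set: R] beta ->
  (forall t, 0 <= beta t <= beta_max) ->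
  (forall i, measurable_fun [set: Omega] (fun w => X0 w ord0 i)) ->
  (forall i, measurable_fun [set: Omega] (fun w => Z w ord0 i)) ->
  std_gauss_indep P X0 Z ->
  compact Xset ->
  (forall w, Xset (X0 w)) ->
  (forall x, Xset x -> norm2 x <= Bx) ->
  (forall t i, measurable_fun [set: Omega]
     (fun w => s_theta (vp_xt (vp_alpha beta t) X0 Z w) t ord0 i)) ->
  (forall t, 0 <= eps_s t) ->
  (forall t, 0 <= t ->
     (\int[P]_w (sqnorm2 (score P (vp_alpha beta t) X0
                            (vp_xt (vp_alpha beta t) X0 Z w)
                          - s_theta (vp_xt (vp_alpha beta t) X0 Z w) t))%:E
      <= ((eps_s t) ^+ 2)%:E)%E) ->
  forall t, 0 <= t <= T ->
    let a := vp_alpha beta t in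
    let x0hat := fun w =>
      (Num.sqrt a)^-1 *: (vp_xt a X0 Z w + (1 - a) *: s_theta (vp_xt a X0 Z w) t) in
    (\int[P]_w (sqnorm2 (x0hat w))%:E
       <= ((Bx + (1 - a) / Num.sqrt a * eps_s t) ^+ 2)%:E)%E.
Proof.
move=> mbeta hbeta mX0 mZ indep cX Xs Xn ms eps0 hint t /andP[t0 tT].
cbv zeta; set a := vp_alpha beta t.
have a0 : 0 < a by rewrite /a /vp_alpha expR_gt0.
have a1 : a <= 1.
  rewrite /a /vp_alpha -expR0 ler_expR oppr_le0; apply: fine_ge0.
  by apply: integral_ge0 => s _; rewrite lee_fin; case/andP: (hbeta s).
have P1 : (P : {measure set Omega -> \bar R}) setT = 1%E by exact: probability_setT.
have [w0 _] : [set: Omega] !=set0.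
  apply/set0P/negP => /eqP h; move: P1; rewrite h measure0 => /eqP.
  by rewrite eq_sym onee_eq0.

have Bx0 : 0 <= Bx := le_trans (sqrtr_ge0 _) (Xn _ (Xs w0)).
have sq0 w : 0 <= sqnorm2 (X0 w) by apply: sumr_ge0 => j _; exact: sqr_ge0.
have bX2 w : sqnorm2 (X0 w) <= Bx ^+ 2.
  have := Xn _ (Xs w); rewrite /norm2 => h.
  rewrite -(sqr_sqrtr (sq0 w)) lerXn2r // ?nnegrE // sqrtr_ge0.
have bX w i : `|X0 w ord0 i| <= Bx.
  have h : `|X0 w ord0 i| ^+ 2 <= Bx ^+ 2.
    rewrite real_normK ?num_real //; apply: le_trans (bX2 w).
    rewrite /sqnorm2 (bigD1 i) //= lerDl; apply: sumr_ge0 => j _; exact: sqr_ge0.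
  by have := normr_ge0 (X0 w ord0 i); nra.
have heps := hint t t0; rewrite -/a in heps.
have [a_1|a_n1] := eqVneq a 1.
  rewrite a_1 subrr sqrtr1 invr1 mul0r mul0r addr0.
  apply: (@le_trans _ _ (\int[P]_w (Bx ^+ 2)%:E)%E); first apply: ge0_le_integral_nm.
  - by move=> w; rewrite lee_fin; apply: sumr_ge0 => j _; exact: sqr_ge0.
  - move=> w; rewrite lee_fin /vp_xt subrr sqrtr0 sqrtr1 !scale0r !scale1r !addr0.
    exact: bX2.
  by rewrite integral_cst // P1 mule1.
have a_lt1 : a < 1 by rewrite lt_neqAle a_n1 a1.
set c := (1 - a) / Num.sqrt a.
have c0 : 0 < c by rewrite /c divr_gt0 ?subr_gt0 ?sqrtr_gt0.
pose Y w := sqnorm2 ((Num.sqrt a)^-1 *: (vp_xt a X0 Z w + (1 - a) *: s_theta (vp_xt a X0 Z w) t)).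
pose G w := sqnorm2 (score P a X0 (vp_xt a X0 Z w) - s_theta (vp_xt a X0 Z w) t).
have sqn0 (v : 'rV[R]_n) : 0 <= sqnorm2 v by apply: sumr_ge0 => j _; exact: sqr_ge0.
have mY : measurable_fun setT Y.
  rewrite /Y /sqnorm2; apply: measurable_sum => i.
  apply: measurable_funX.
  under eq_fun do rewrite !mxE.
  apply: measurable_funM; first exact: measurable_cst.
  apply: measurable_funD.
    apply: measurable_funD; apply: measurable_funM => //; exact: measurable_cst.
  apply: measurable_funM; first exact: measurable_cst.
  exact: ms.
have key l : 0 < l -> (\int[P]_w (Y w)%:E <= ((1 + l) * Bx ^+ 2 + (1 + l^-1) * (c * eps_s t) ^+ 2)%:E)%E.
  move=> l0.
  have -> : (1 + l) * Bx ^+ 2 + (1 + l^-1) * (c * eps_s t) ^+ 2 =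
     (1 + l) * Bx ^+ 2 + ((1 + l^-1) * c ^+ 2) * (eps_s t ^+ 2) by rewrite exprMn; ring.
  apply: (@final_step _ _ _ _ _ G) => //.
  - by move=> w; exact: sqn0.
  - by move=> w; exact: sqn0.
  - by rewrite mulr_ge0 ?sqr_ge0 // addr_ge0 // ltW.
  - by rewrite mulr_gt0 ?exprn_gt0 // addr_gt0 // invr_gt0.
  - move=> w; exact: (pointwise P a0 a_lt1 mX0 bX Bx0 _ _ l0 bX2).
have Y0 : (0 <= \int[P]_w (Y w)%:E)%E by apply: integral_ge0 => w _; rewrite lee_fin sqn0.
have fY : (\int[P]_w (Y w)%:E)%E \is a fin_num.
  by rewrite ge0_fin_numE // (le_lt_trans (key 1 ltr01)) // ltry.
change (\int[P]_w (Y w)%:E <= ((Bx + c * eps_s t) ^+ 2)%:E)%E.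
rewrite -(fineK fY) lee_fin.
apply: lam_bound => //; first by rewrite mulr_ge0 ?eps0 // ltW.
by move=> l l0; rewrite -lee_fin fineK // key.
Qed.
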